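(* Let $\mathcal{T}:\mathrm{Cvx}(\mathbb{R}^n)\to\mathrm{Cvx}(\mathbb{R}^n)$ satisfy: (1) $\phi\le\psi$ iff $\mathcal{T}\phi\le\mathcal{T}\psi$; (2) $\mathcal{T}\phi=\phi$ for every positively homogeneous $\phi\in\mathrm{Cvx}(\mathbb{R}^n)$; (3) whenever $\phi',\psi'\in\mathrm{Im}\,\mathcal{T}$ and $\phi'+\psi'$ is finite at some point, $\phi'+\psi'\in\mathrm{Im}\,\mathcal{T}$. Then: (a) for every $a\in\mathbb{R}^n$ and $c\in\mathbb{R}$ there exist $b\in\mathbb{R}^n$ and $d\in\mathbb{R}$ with $\mathcal{T}\delta_{a,c}=\delta_{b,d}$; (b) for every affine function $\ell$ and every $\phi\in\mathrm{Cvx}(\mathbb{R}^n)$, $\ell$ is tangent to $\phi$ if and only if $\mathcal{T}\ell$ is tangent to $\mathcal{T}\phi$.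
   Context: $\mathrm{Cvx}(\mathbb{R}^n)$ denotes the set of functions $\phi:\mathbb{R}^n\to(-\infty,\infty]$ that are convex, lower semicontinuous, and finite at at least one point; $\mathrm{Im}\,\mathcal{T}=\{\mathcal{T}\phi:\phi\in\mathrm{Cvx}(\mathbb{R}^n)\}$. Positively homogeneous means $\phi(\lambda x)=\lambda\phi(x)$ for all $x$ and $\lambda>0$. For $a\in\mathbb{R}^n$, $c\in\mathbb{R}$, $\delta_{a,c}(x)=c$ if $x=a$ and $+\infty$ otherwise. An affine function $\ell$ is tangent to $\phi$ if $\ell\le\phi$ but $\ell+\epsilon\not\le\phi$ for every $\epsilon>0$. (Affine functions belong to $\mathrm{Cvx}(\mathbb{R}^n)$, and $\mathcal{T}$ maps affine functions to affine functions.) *)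

(* Defs.v *)
From Stdlib Require Import Reals Lra Classical ClassicalEpsilon FunctionalExtensionality.
From Stdlib Require Fin.
Open Scope R_scope.

Definition Vec (n : nat) := Fin.t n -> R.

Definition vadd {n} (x y : Vec n) : Vec n := fun i => x i + y i.
Definition vscal {n} (t : R) (x : Vec n) : Vec n := fun i => t * x i.

Fixpoint dot (n : nat) : Vec n -> Vec n -> R :=
  match n return Vec n -> Vec n -> R with
  | O => fun _ _ => 0
  | S m => fun x y => x Fin.F1 * y Fin.F1
                      + dot m (fun i => x (Fin.FS i)) (fun i => y (Fin.FS i))
  end.

Inductive ER := Fin (r : R) | PInf.

Definition ERle (a b : ER) : Prop :=
  match a, b with
  | Fin x, Fin y => x <= y
  | _, PInf => True
  | PInf, Fin _ => False
  end.

Definition ERadd (a b : ER) : ER :=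
  match a, b with
  | Fin x, Fin y => Fin (x + y)
  | _, _ => PInf
  end.

(** multiplication by a strictly positive scalar *)
Definition ERscal (t : R) (a : ER) : ER :=
  match a with Fin x => Fin (t * x) | PInf => PInf end.

Definition efun (n : nat) := Vec n -> ER.

Definition fle {n} (f g : efun n) : Prop := forall x, ERle (f x) (g x).

(** convexity: the epigraph is convex *)
Definition convex {n} (f : efun n) : Prop :=
  forall (x y : Vec n) (a b t : R), 0 <= t <= 1 ->
    ERle (f x) (Fin a) -> ERle (f y) (Fin b) ->
    ERle (f (vadd (vscal t x) (vscal (1 - t) y))) (Fin (t * a + (1 - t) * b)).

Definition lsc {n} (f : efun n) : Prop :=
  forall (x : Vec n) (r : R), ~ ERle (f x) (Fin r) ->
    exists delta, delta > 0 /\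
      forall y : Vec n, (forall i, Rabs (y i - x i) < delta) ->
        ~ ERle (f y) (Fin r).

Definition proper {n} (f : efun n) : Prop := exists x, f x <> PInf.

Definition Cvx {n} (f : efun n) : Prop := convex f /\ lsc f /\ proper f.

Definition pos_homogeneous {n} (f : efun n) : Prop :=
  forall (x : Vec n) (lam : R), lam > 0 -> f (vscal lam x) = ERscal lam (f x).

Definition InIm {n} (T : efun n -> efun n) (g : efun n) : Prop :=
  exists phi, Cvx phi /\ T phi = g.

Definition delta {n} (a : Vec n) (c : R) : efun n :=
  fun x => if excluded_middle_informative (x = a) then Fin c else PInf.

Definition affine {n} (l : efun n) : Prop :=
  exists (u : Vec n) (beta : R), forall x, l x = Fin (dot n u x + beta).

Definition tangent {n} (l phi : efun n) : Prop :=
  fle l phi /\ forall eps, eps > 0 -> ~ fle (fun x => ERadd (l x) (Fin eps)) phi.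

(* Main.v *)
Require Import Defs.
From Stdlib Require Import Reals Lra Classical ClassicalEpsilon FunctionalExtensionality.
From Stdlib Require Fin.
Open Scope R_scope.

Definition zv (n : nat) : Vec n := fun _ => 0.

Lemma dot_add_l n : forall (u v x : Vec n), dot n (vadd u v) x = dot n u x + dot n v x.
Proof.
  induction n; intros; simpl; [ring|].
  specialize (IHn (fun i => u (Fin.FS i)) (fun i => v (Fin.FS i)) (fun i => x (Fin.FS i))).
  unfold vadd in *. rewrite IHn. ring.
Qed.

Lemma dot_scal_l n : forall t (u x : Vec n), dot n (vscal t u) x = t * dot n u x.
Proof.
  induction n; intros; simpl; [ring|].
  specialize (IHn t (fun i => u (Fin.FS i)) (fun i => x (Fin.FS i))).
  unfold vscal in *. rewrite IHn. ring.
Qed.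

Lemma dot_comm n : forall (u x : Vec n), dot n u x = dot n x u.
Proof.
  induction n; intros; simpl; [ring|].
  rewrite IHn. ring.
Qed.

Lemma dot_add_r n (u v x : Vec n) : dot n x (vadd u v) = dot n x u + dot n x v.
Proof. rewrite !(dot_comm n x). apply dot_add_l. Qed.

Lemma dot_scal_r n t (u x : Vec n) : dot n x (vscal t u) = t * dot n x u.
Proof. rewrite !(dot_comm n x). apply dot_scal_l. Qed.

Lemma dot_comb n (k x y : Vec n) t :
  dot n k (vadd (vscal t x) (vscal (1 - t) y)) = t * dot n k x + (1 - t) * dot n k y.
Proof. rewrite dot_add_r, !dot_scal_r. ring. Qed.

Lemma dot_zv n : forall (u : Vec n), dot n u (zv n) = 0.
Proof.
  induction n; intros; simpl; [ring|].
  unfold zv in *. rewrite (IHn (fun i => u (Fin.FS i))). ring.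
Qed.

Lemma dot_self_nonneg n : forall (u : Vec n), 0 <= dot n u u.
Proof.
  induction n; intros; simpl; [lra|].
  specialize (IHn (fun i => u (Fin.FS i))). nra.
Qed.

Lemma dot_self_zero n : forall (u : Vec n), dot n u u = 0 -> u = zv n.
Proof.
  induction n; intros u H; apply functional_extensionality; intro i.
  - apply (Fin.case0 (fun i => u i = zv 0 i)).
  - simpl in H.
    pose proof (dot_self_nonneg n (fun i => u (Fin.FS i))).
    assert (u Fin.F1 = 0) by nra.
    assert (dot n (fun i => u (Fin.FS i)) (fun i => u (Fin.FS i)) = 0) by nra.
    specialize (IHn _ H2).
    apply (Fin.caseS' i (fun i => u i = zv (S n) i)).
    + exact H1.
    + intro p. apply (f_equal (fun f => f p)) in IHn. exact IHn.
Qed.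

Fixpoint sabs (n : nat) : Vec n -> R :=
  match n return Vec n -> R with
  | O => fun _ => 0
  | S m => fun u => Rabs (u Fin.F1) + sabs m (fun i => u (Fin.FS i))
  end.

Lemma sabs_nonneg n : forall u, 0 <= sabs n u.
Proof.
  induction n; intros; simpl; [lra|].
  specialize (IHn (fun i => u (Fin.FS i))). pose proof (Rabs_pos (u Fin.F1)). lra.
Qed.

Lemma dot_lip n : forall (u x y : Vec n) d, (forall i, Rabs (y i - x i) <= d) ->
  Rabs (dot n u y - dot n u x) <= sabs n u * d.
Proof.
  induction n; intros u x y d H; simpl.
  - rewrite Rminus_0_r, Rabs_R0. lra.
  - specialize (IHn (fun i => u (Fin.FS i)) (fun i => x (Fin.FS i)) (fun i => y (Fin.FS i)) d
      (fun i => H (Fin.FS i))).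
    replace (u Fin.F1 * y Fin.F1 + dot n (fun i => u (Fin.FS i)) (fun i => y (Fin.FS i)) -
      (u Fin.F1 * x Fin.F1 + dot n (fun i => u (Fin.FS i)) (fun i => x (Fin.FS i))))
      with (u Fin.F1 * (y Fin.F1 - x Fin.F1) + (dot n (fun i => u (Fin.FS i)) (fun i => y (Fin.FS i)) -
       dot n (fun i => u (Fin.FS i)) (fun i => x (Fin.FS i)))) by ring.
    eapply Rle_trans; [apply Rabs_triang|].
    rewrite Rabs_mult.
    pose proof (H Fin.F1). pose proof (Rabs_pos (u Fin.F1)).
    assert (Rabs (u Fin.F1) * Rabs (y Fin.F1 - x Fin.F1) <= Rabs (u Fin.F1) * d)
      by (apply Rmult_le_compat_l; lra).
    lra.
Qed.

Lemma dot_lip' n (u x y : Vec n) d : (forall i, Rabs (y i - x i) <= d) ->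
  dot n u x - sabs n u * d <= dot n u y.
Proof.
  intro H. pose proof (dot_lip n u x y d H) as H'.
  pose proof (Rle_abs (-(dot n u y - dot n u x))). rewrite Rabs_Ropp in *. lra.
Qed.

Lemma Cvx_fin n (F : Vec n -> R) (L : R) : 0 <= L ->
  (forall x y t, 0 <= t <= 1 -> F (vadd (vscal t x) (vscal (1 - t) y)) <= t * F x + (1 - t) * F y) ->
  (forall x y d, 0 <= d -> (forall i, Rabs (y i - x i) <= d) -> F x - L * d <= F y) ->
  Cvx (fun x => Fin (F x)).
Proof.
  intros HL Hc Hl. split; [|split].
  - intros x y a b t Ht Ha Hb; simpl in *.
    specialize (Hc x y t Ht). nra.
  - intros x r Hr; simpl in Hr.
    assert (Hr' : r < F x) by lra.
    exists ((F x - r) / (L + 1)). split.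
    + apply Rdiv_lt_0_compat; lra.
    + intros y Hy Hle; simpl in Hle.
      assert (H1 : F x - L * ((F x - r) / (L + 1)) <= F y).
      { apply Hl. left; apply Rdiv_lt_0_compat; lra. intro i. left. apply Hy. }
      assert (H2 : L * ((F x - r) / (L + 1)) < F x - r).
      { assert (E : L * ((F x - r) / (L + 1)) = (F x - r) - (F x - r) / (L + 1)) by (field; lra).
        rewrite E. assert (0 < (F x - r) / (L + 1)) by (apply Rdiv_lt_0_compat; lra). lra. }
      lra.
  - exists (zv n). discriminate.
Qed.

Definition lin {n} (k : Vec n) : efun n := fun x => Fin (dot n k x).
Definition cst {n} (e : R) : efun n := fun _ => Fin e.
Definition mx2 {n} (k1 k2 : Vec n) : efun n := fun x => Fin (Rmax (dot n k1 x) (dot n k2 x)).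

Lemma Cvx_lin n (k : Vec n) : Cvx (lin k).
Proof.
  apply (Cvx_fin n _ (sabs n k)); [apply sabs_nonneg| |].
  - intros. rewrite dot_comb. lra.
  - intros. apply dot_lip'. auto.
Qed.

Lemma Cvx_cst n e : Cvx (@cst n e).
Proof.
  apply (Cvx_fin n (fun _ => e) 0); intros; lra.
Qed.

Lemma Cvx_mx2 n (k1 k2 : Vec n) : Cvx (mx2 k1 k2).
Proof.
  apply (Cvx_fin n _ (sabs n k1 + sabs n k2)).
  - pose proof (sabs_nonneg n k1); pose proof (sabs_nonneg n k2); lra.
  - intros x y t Ht. rewrite !dot_comb.
    pose proof (Rmax_l (dot n k1 x) (dot n k2 x)). pose proof (Rmax_r (dot n k1 x) (dot n k2 x)).
    pose proof (Rmax_l (dot n k1 y) (dot n k2 y)). pose proof (Rmax_r (dot n k1 y) (dot n k2 y)).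
    apply Rmax_lub; nra.
  - intros x y d Hd0 Hd.
    pose proof (dot_lip' n k1 x y d Hd). pose proof (dot_lip' n k2 x y d Hd).
    pose proof (sabs_nonneg n k1); pose proof (sabs_nonneg n k2).
    pose proof (Rmax_l (dot n k1 y) (dot n k2 y)). pose proof (Rmax_r (dot n k1 y) (dot n k2 y)).
    unfold Rmax at 1. destruct (Rle_dec (dot n k1 x) (dot n k2 x)); nra.
Qed.
Lemma mydiv_nonneg a b : 0 <= a -> 0 < b -> 0 <= a / b.
Proof. intros. unfold Rdiv. apply Rmult_le_pos; [lra| left; apply Rinv_0_lt_compat; lra]. Qed.

Lemma mydiv_le1 a b : a <= b -> 0 < b -> a / b <= 1.
Proof.
  intros. apply Rmult_le_reg_r with b; [lra|]. unfold Rdiv. rewrite Rmult_assoc, Rinv_l by lra. lra.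
Qed.

Lemma mydiv_lt1 a b : a < b -> 0 < b -> a / b < 1.
Proof.
  intros. apply Rmult_lt_reg_r with b; [lra|]. unfold Rdiv. rewrite Rmult_assoc, Rinv_l by lra. lra.
Qed.
Lemma delta_at n (a : Vec n) c : delta a c a = Fin c.
Proof. unfold delta. destruct (excluded_middle_informative (a = a)); congruence. Qed.

Lemma delta_off n (a : Vec n) c y : y <> a -> delta a c y = PInf.
Proof. intro H. unfold delta. destruct (excluded_middle_informative (y = a)); congruence. Qed.

Lemma ERle_PInf_l v : ERle PInf v -> v = PInf.
Proof. destruct v; simpl; tauto. Qed.

Lemma vcomb_same n (a : Vec n) t : vadd (vscal t a) (vscal (1 - t) a) = a.
Proof. apply functional_extensionality; intro i. unfold vadd, vscal. ring. Qed.

Lemma neq_coord n (x a : Vec n) : x <> a -> exists i, x i <> a i.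
Proof.
  intro H. apply NNPP. intro H'. apply H. apply functional_extensionality. intro i.
  apply NNPP. intro H2. apply H'. exists i. exact H2.
Qed.

Lemma Cvx_delta n (a : Vec n) c : Cvx (delta a c).
Proof.
  split; [|split].
  - intros x y p q t Ht Hx Hy.
    destruct (excluded_middle_informative (x = a)) as [->|Hxa];
      [| rewrite delta_off in Hx by exact Hxa; simpl in Hx; tauto].
    destruct (excluded_middle_informative (y = a)) as [->|Hya];
      [| rewrite delta_off in Hy by exact Hya; simpl in Hy; tauto].
    rewrite vcomb_same. rewrite delta_at in *. simpl in *. nra.
  - intros x r Hr.
    destruct (excluded_middle_informative (x = a)) as [->|Hxa].
    + rewrite delta_at in Hr. simpl in Hr.
      exists 1. split; [lra|]. intros y _.
      destruct (excluded_middle_informative (y = a)) as [->|Hya].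
      * rewrite delta_at. simpl. exact Hr.
      * rewrite delta_off by exact Hya. simpl. tauto.
    + destruct (neq_coord n x a Hxa) as [i Hi].
      exists (Rabs (x i - a i)). split.
      * apply Rabs_pos_lt. lra.
      * intros y Hy. specialize (Hy i).
        destruct (excluded_middle_informative (y = a)) as [->|Hya].
        -- rewrite Rabs_minus_sym in Hy. lra.
        -- rewrite delta_off by exact Hya. simpl. tauto.
  - exists a. rewrite delta_at. discriminate.
Qed.

Lemma fle_delta n (chi : efun n) a c : fle chi (delta a c) <-> ERle (chi a) (Fin c).
Proof.
  split.
  - intro H. specialize (H a). rewrite delta_at in H. exact H.
  - intros H y. destruct (excluded_middle_informative (y = a)) as [->|Hya].
    + rewrite delta_at. exact H.
    + rewrite delta_off by exact Hya. destruct (chi y); simpl; auto.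
Qed.

Lemma chain n (a : Vec n) c phi : Cvx phi -> fle (delta a c) phi ->
  exists c', c <= c' /\ phi = delta a c'.
Proof.
  intros [_ [_ [x Hx]]] H.
  destruct (excluded_middle_informative (x = a)) as [->|Hxa].
  - destruct (phi a) as [c'|] eqn:E; [|congruence].
    exists c'. split.
    + specialize (H a). rewrite delta_at, E in H. exact H.
    + apply functional_extensionality. intro y.
      destruct (excluded_middle_informative (y = a)) as [->|Hya].
      * rewrite delta_at. exact E.
      * rewrite delta_off by exact Hya. specialize (H y). rewrite delta_off in H by exact Hya.
        apply ERle_PInf_l. exact H.
  - exfalso. apply Hx. specialize (H x). rewrite delta_off in H by exact Hxa.
    apply ERle_PInf_l. exact H.
Qed.

Lemma ph_lin n (k : Vec n) : pos_homogeneous (lin k).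
Proof. intros x lam _. unfold lin. simpl. rewrite dot_scal_r. reflexivity. Qed.

Lemma ph_mx2 n (k1 k2 : Vec n) : pos_homogeneous (mx2 k1 k2).
Proof.
  intros x lam Hl. unfold mx2. simpl. rewrite !dot_scal_r. rewrite RmaxRmult by lra. reflexivity.
Qed.

Lemma vscal_zero_iff n lam (x : Vec n) : lam <> 0 -> (vscal lam x = zv n <-> x = zv n).
Proof.
  intro Hl. split; intro H.
  - apply functional_extensionality; intro i. apply (f_equal (fun f => f i)) in H.
    unfold vscal, zv in *. apply Rmult_integral in H. destruct H; [lra| exact H].
  - subst. apply functional_extensionality; intro i. unfold vscal, zv. ring.
Qed.

Lemma ph_delta0 n : pos_homogeneous (delta (zv n) 0).
Proof.
  intros x lam Hl.
  destruct (excluded_middle_informative (x = zv n)) as [->|Hx].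
  - assert (E : vscal lam (zv n) = zv n) by (apply (proj2 (vscal_zero_iff n lam (zv n) ltac:(lra))); reflexivity).
    rewrite E, delta_at. simpl. f_equal. ring.
  - rewrite (delta_off _ _ _ x) by exact Hx. rewrite delta_off. reflexivity.
    intro H. apply vscal_zero_iff in H; [tauto| lra].
Qed.

Lemma ERle_refl v : ERle v v.
Proof. destruct v; simpl; auto; lra. Qed.
Lemma dot_zv_l n (u : Vec n) : dot n (zv n) u = 0.
Proof. rewrite dot_comm. apply dot_zv. Qed.

Lemma ERadd_fin_inv a b r : ERadd a b = Fin r -> exists x y, a = Fin x /\ b = Fin y /\ r = x + y.
Proof. destruct a, b; simpl; try discriminate. intro H; injection H; intros; subst. eauto. Qed.

Section Main.
Context (n : nat) (T : efun n -> efun n)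
  (HT : forall phi, Cvx phi -> Cvx (T phi))
  (H1 : forall phi psi, Cvx phi -> Cvx psi -> (fle phi psi <-> fle (T phi) (T psi)))
  (H2 : forall phi, Cvx phi -> pos_homogeneous phi -> forall x, T phi x = phi x)
  (H3 : forall phi' psi', InIm T phi' -> InIm T psi' ->
          (exists x, ERadd (phi' x) (psi' x) <> PInf) ->
          InIm T (fun x => ERadd (phi' x) (psi' x))).

Lemma Tfix h : Cvx h -> pos_homogeneous h -> T h = h.
Proof. intros. apply functional_extensionality. intro x. apply H2; auto. Qed.

Lemma minor h phi : Cvx h -> pos_homogeneous h -> Cvx phi -> (fle h phi <-> fle h (T phi)).
Proof. intros Hc Hp Hphi. pose proof (H1 h phi Hc Hphi) as E. rewrite Tfix in E; auto. Qed.

Lemma minorL h phi : Cvx h -> pos_homogeneous h -> Cvx phi -> fle h phi -> fle h (T phi).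
Proof. intros Hc Hp Hphi. apply (proj1 (minor h phi Hc Hp Hphi)). Qed.

Lemma minorR h phi : Cvx h -> pos_homogeneous h -> Cvx phi -> fle h (T phi) -> fle h phi.
Proof. intros Hc Hp Hphi. apply (proj2 (minor h phi Hc Hp Hphi)). Qed.

Lemma ImT phi : Cvx phi -> InIm T (T phi).
Proof. intro H. exists phi. auto. Qed.

Lemma ImH h : Cvx h -> pos_homogeneous h -> InIm T h.
Proof. intros. exists h. split; auto. apply Tfix; auto. Qed.

Lemma ImLin k : InIm T (lin k).
Proof. apply ImH; [apply Cvx_lin | apply ph_lin]. Qed.

Lemma minor_lin a c k : dot n k a <= c -> fle (lin k) (T (delta a c)).
Proof.
  intro H. apply minorL; [apply Cvx_lin | apply ph_lin | apply Cvx_delta |].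
  apply fle_delta. simpl. exact H.
Qed.

Lemma minor_lin_rev a c k : fle (lin k) (T (delta a c)) -> dot n k a <= c.
Proof.
  intro H. apply minorR in H; [| apply Cvx_lin | apply ph_lin | apply Cvx_delta ].
  apply fle_delta in H. exact H.
Qed.

Lemma proper_T phi : Cvx phi -> exists x r, T phi x = Fin r.
Proof.
  intro H. destruct (HT phi H) as [_ [_ [x Hx]]]. destruct (T phi x) eqn:E; [|congruence].
  eauto.
Qed.

Lemma S1 a k (Hk : dot n k a = 1) c y r : T (delta a c) y = Fin r -> r = c * dot n k y.
Proof.
  intro Hy.
  set (psi := T (delta a c)) in *.
  assert (Hmin : forall y r, psi y = Fin r -> c * dot n k y <= r).
  { intros y0 r0 E. assert (F : fle (lin (vscal c k)) psi).
    { apply minor_lin. rewrite dot_scal_l, Hk. lra. }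
    specialize (F y0). rewrite E in F. simpl in F. rewrite dot_scal_l in F. exact F. }
  set (q := fun y => ERadd (psi y) (lin (vscal (-c) k) y)).
  destruct (proper_T (delta a c) (Cvx_delta _ _ _)) as [x0 [r0 Hx0]].
  assert (Iq : InIm T q).
  { apply H3; [apply ImT, Cvx_delta | apply ImLin |].
    exists x0. unfold psi; rewrite Hx0. simpl. discriminate. }
  assert (IPsi : InIm T (fun y => ERadd (psi y) (q y))).
  { apply H3; [apply ImT, Cvx_delta | exact Iq |].
    exists x0. unfold q, psi. rewrite Hx0. simpl. discriminate. }
  destruct IPsi as [phi' [Hphi' TPsi]].
  assert (Fle : fle psi (fun y => ERadd (psi y) (q y))).
  { intro y0. unfold q. destruct (psi y0) eqn:E; simpl; [|trivial].
    specialize (Hmin y0 r1 E). rewrite dot_scal_l. lra. }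
  rewrite <- TPsi in Fle. unfold psi in Fle.
  apply H1 in Fle; [| apply Cvx_delta | exact Hphi'].
  destruct (chain n a c phi' Hphi' Fle) as [c' [Hcc' Ephi]].
  assert (F2 : fle (lin (vscal c' k)) (fun y => ERadd (psi y) (q y))).
  { rewrite <- TPsi. apply minorL; [apply Cvx_lin | apply ph_lin | exact Hphi' |].
    rewrite Ephi. apply fle_delta. simpl. rewrite dot_scal_l, Hk. lra. }
  assert (F3 : fle (lin (vscal ((c + c') / 2) k)) psi).
  { intro y0. specialize (F2 y0). unfold q in F2. destruct (psi y0) eqn:E; simpl in *; [|trivial].
    rewrite !dot_scal_l in F2. rewrite dot_scal_l. replace ((c + c') / 2 * dot n k y0) with ((c * dot n k y0 + c' * dot n k y0) / 2) by field. lra. }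
  apply minor_lin_rev in F3. rewrite dot_scal_l, Hk in F3.
  assert (c' = c) by lra. subst c'.
  rewrite Ephi in TPsi. fold psi in TPsi.
  apply (f_equal (fun f => f y)) in TPsi. unfold q in TPsi. rewrite Hy in TPsi. simpl in TPsi.
  injection TPsi. rewrite dot_scal_l. intro. lra.
Qed.

Lemma Kpos a k (Hk : dot n k a = 1) c y r : T (delta a c) y = Fin r -> 0 <= dot n k y.
Proof.
  intro Hy. pose proof (S1 a k Hk c y r Hy) as Er.
  assert (F : fle (mx2 (vscal c k) (vscal (c - 1) k)) (T (delta a c))).
  { apply minorL; [apply Cvx_mx2 | apply ph_mx2 | apply Cvx_delta |].
    apply fle_delta. simpl. rewrite !dot_scal_l, Hk. apply Rmax_lub; lra. }
  specialize (F y). rewrite Hy in F. simpl in F. rewrite !dot_scal_l in F.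
  pose proof (Rmax_r (c * dot n k y) ((c - 1) * dot n k y)). lra.
Qed.

Lemma Knz a k (Hk : dot n k a = 1) c : exists y r, T (delta a c) y = Fin r /\ 0 < dot n k y.
Proof.
  apply NNPP. intro Hno.
  assert (F : fle (lin (vscal (c + 1) k)) (T (delta a c))).
  { intro y. destruct (T (delta a c) y) eqn:E; simpl; [|trivial].
    pose proof (S1 a k Hk c y r E). pose proof (Kpos a k Hk c y r E).
    assert (dot n k y = 0).
    { destruct H0; [|auto]. exfalso. apply Hno. eauto. }
    rewrite dot_scal_l. rewrite H4 in *. lra. }
  apply minor_lin_rev in F. rewrite dot_scal_l, Hk in F. lra.
Qed.

Lemma shift a k (Hk : dot n k a = 1) c t : 0 <= t ->
  T (delta a (c + t)) = fun y => ERadd (T (delta a c) y) (lin (vscal t k) y).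
Proof.
  intro Ht.
  destruct (Knz a k Hk c) as [y0 [r0 [E0 Ky0]]].
  assert (I : InIm T (fun y => ERadd (T (delta a c) y) (lin (vscal t k) y))).
  { apply H3; [apply ImT, Cvx_delta | apply ImLin |].
    exists y0. rewrite E0. simpl. discriminate. }
  destruct I as [phi' [Hphi' TP]].
  assert (Fle : fle (T (delta a c)) (fun y => ERadd (T (delta a c) y) (lin (vscal t k) y))).
  { intro y. destruct (T (delta a c) y) eqn:E; simpl; [|trivial].
    pose proof (Kpos a k Hk c y r E). rewrite dot_scal_l. nra. }
  rewrite <- TP in Fle. apply H1 in Fle; [| apply Cvx_delta | exact Hphi'].
  destruct (chain n a c phi' Hphi' Fle) as [c' [Hcc' Ephi]].
  subst phi'.
  assert (V := f_equal (fun f => f y0) TP). simpl in V. rewrite E0 in V. simpl in V.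
  pose proof (S1 a k Hk c' y0 _ V) as E1.
  pose proof (S1 a k Hk c y0 _ E0) as E2.
  rewrite dot_scal_l in E1.
  assert (c' = c + t).
  { assert ((c' - c - t) * dot n k y0 = 0) by lra.
    apply Rmult_integral in H. destruct H; lra. }
  subst c'. exact TP.
Qed.

Lemma dom_eq a k (Hk : dot n k a = 1) c c' y :
  T (delta a c) y = PInf -> T (delta a c') y = PInf.
Proof.
  intro H. destruct (Rle_dec c c').
  - replace c' with (c + (c' - c)) by ring. rewrite (shift a k Hk c (c' - c)) by lra.
    rewrite H. reflexivity.
  - pose proof (shift a k Hk c' (c - c') ltac:(lra)) as E.
    replace (c' + (c - c')) with c in E by ring.
    rewrite E in H. destruct (T (delta a c') y); simpl in H; [discriminate| reflexivity].
Qed.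

Lemma dom_fin a k (Hk : dot n k a = 1) c c' y r :
  T (delta a c) y = Fin r -> exists r', T (delta a c') y = Fin r'.
Proof.
  intro H. destruct (T (delta a c') y) eqn:E; [eauto|].
  apply (dom_eq a k Hk c' c) in E. congruence.
Qed.


Lemma vscal_comb a p q t : vadd (vscal t (vscal p a)) (vscal (1 - t) (vscal q a)) = vscal (t * p + (1 - t) * q) a :> Vec n.
Proof. apply functional_extensionality; intro i. unfold vadd, vscal. ring. Qed.

Lemma k0_spec a : a <> zv n -> dot n (vscal (/ dot n a a) a) a = 1.
Proof.
  intro Ha. rewrite dot_scal_l.
  assert (dot n a a <> 0) by (intro E; apply Ha; apply dot_self_zero; exact E).
  field. exact H.
Qed.

Lemma ray a (Ha : a <> zv n) c y r : T (delta a c) y = Fin r -> exists kap, 0 < kap /\ y = vscal kap a.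
Proof.
  intro Hy.
  set (k0 := vscal (/ dot n a a) a).
  assert (Hk0 : dot n k0 a = 1) by (apply k0_spec; exact Ha).
  destruct (dom_fin a k0 Hk0 c 1 y r Hy) as [r1 Hy1].
  pose proof (S1 a k0 Hk0 1 y r1 Hy1) as E0.
  set (kap := dot n k0 y).
  set (w := vadd y (vscal (- kap) a)).
  assert (Hwa : dot n w a = 0).
  { unfold w, kap, k0. rewrite dot_add_l, !dot_scal_l, (dot_comm n a y).
    assert (dot n a a <> 0) by (intro E; apply Ha; apply dot_self_zero; exact E).
    field. exact H. }
  assert (Hk1 : dot n (vadd k0 w) a = 1) by (rewrite dot_add_l; lra).
  pose proof (S1 a (vadd k0 w) Hk1 1 y r1 Hy1) as E1.
  rewrite dot_add_l in E1.
  assert (Hwy : dot n w y = 0) by (unfold kap in *; lra).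
  assert (Hww : dot n w w = 0).
  { unfold w at 2. rewrite dot_add_r, dot_scal_r, Hwy, Hwa. ring. }
  apply dot_self_zero in Hww.
  assert (Ey : y = vscal kap a).
  { apply functional_extensionality; intro i. apply (f_equal (fun f => f i)) in Hww.
    unfold w, vadd, vscal, zv in Hww. unfold vscal. lra. }
  exists kap. split; [|exact Ey].
  pose proof (Kpos a k0 Hk0 1 y r1 Hy1) as Kp. fold kap in Kp.
  destruct Kp as [Kp|Kp]; [exact Kp|].
  exfalso.
  assert (Ez : y = zv n) by (rewrite Ey, <- Kp; apply functional_extensionality; intro i; unfold vscal, zv; ring).
  assert (F : fle (T (delta a 1)) (T (delta (zv n) 0))).
  { rewrite (Tfix (delta (zv n) 0)) by (apply Cvx_delta || apply ph_delta0).
    apply fle_delta. rewrite <- Ez, Hy1. simpl. rewrite E0. fold kap. rewrite <- Kp. lra. }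
  apply H1 in F; [| apply Cvx_delta | apply Cvx_delta].
  apply fle_delta in F. rewrite delta_off in F; [simpl in F; exact F|].
  intro E. apply Ha. symmetry. exact E.
Qed.

Lemma fle_T_cst1 a : fle (T (cst 1)) (T (delta a 1)).
Proof. apply (proj1 (H1 _ _ (Cvx_cst n 1) (Cvx_delta n a 1))). apply fle_delta. simpl. lra. Qed.

Lemma T_cst1_nonneg : fle (lin (zv n)) (T (cst 1)).
Proof.
  apply minorL; [apply Cvx_lin | apply ph_lin | apply Cvx_cst |].
  intro y. unfold lin, cst. simpl. rewrite dot_zv_l. lra.
Qed.

Lemma L1 a k (Hk : dot n k a = 1) y r : T (delta a 1) y = Fin r -> T (cst 1) y = Fin (dot n k y).
Proof.
  intro Hy.
  set (psi := T (delta a 1)) in *. set (f := T (cst 1)).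
  assert (Ffle : fle f psi) by apply fle_T_cst1.
  assert (Fpos : fle (lin (zv n)) f) by apply T_cst1_nonneg.
  destruct (Knz a k Hk 1) as [y0 [r0 [E0 Ky0]]]. fold psi in E0.
  assert (Ffin : forall y r, psi y = Fin r -> exists s, f y = Fin s /\ 0 <= s /\ s <= r).
  { intros y1 r1 E1. specialize (Ffle y1). specialize (Fpos y1). rewrite E1 in Ffle.
    destruct (f y1) eqn:Ef; simpl in *; [|tauto]. rewrite dot_zv_l in Fpos. eauto. }
  assert (I : InIm T (fun y => ERadd (psi y) (f y))).
  { apply H3; [apply ImT, Cvx_delta | apply ImT, Cvx_cst |].
    exists y0. destruct (Ffin y0 r0 E0) as [s [Es _]]. rewrite E0, Es. simpl. discriminate. }
  destruct I as [phi' [Hphi' TP]].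
  assert (Fle : fle psi (fun y => ERadd (psi y) (f y))).
  { intro y1. destruct (psi y1) eqn:E1; simpl; [|trivial].
    destruct (Ffin y1 r1 E1) as [s [Es [Hs _]]]. rewrite Es. simpl. lra. }
  rewrite <- TP in Fle. apply H1 in Fle; [| apply Cvx_delta | exact Hphi'].
  destruct (chain n a 1 phi' Hphi' Fle) as [c' [Hcc' Ephi]]. subst phi'.
  assert (Fval : forall y r, psi y = Fin r -> f y = Fin ((c' - 1) * dot n k y)).
  { intros y1 r1 E1. destruct (Ffin y1 r1 E1) as [s [Es _]].
    pose proof (S1 a k Hk 1 y1 r1 E1) as Er.
    assert (V := f_equal (fun g => g y1) TP). simpl in V. rewrite E1, Es in V. simpl in V.
    pose proof (S1 a k Hk c' y1 _ V). rewrite Es. f_equal. nra. }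
  assert (c' <= 2).
  { destruct (Ffin y0 r0 E0) as [s [Es [_ Hs]]]. rewrite (Fval y0 r0 E0) in Es. injection Es.
    pose proof (S1 a k Hk 1 y0 r0 E0). intro. subst s. nra. }
  assert (c' >= 2).
  { apply Rnot_lt_ge. intro Hlt.
    set (e := c' / 2).
    assert (F : fle f (T (delta a e))).
    { intro y1. destruct (T (delta a e) y1) eqn:Ee; simpl; [|destruct (f y1); simpl; trivial].
      pose proof (shift a k Hk e (1 - e) ltac:(unfold e; lra)) as Sh.
      replace (e + (1 - e)) with 1 in Sh by ring.
      assert (V := f_equal (fun g => g y1) Sh). simpl in V. rewrite Ee in V. simpl in V.
      fold psi in V. rewrite (Fval y1 _ V).
      pose proof (S1 a k Hk e y1 r1 Ee). pose proof (Kpos a k Hk e y1 r1 Ee).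
      simpl. unfold e in *. nra. }
    apply H1 in F; [| apply Cvx_cst | apply Cvx_delta].
    apply fle_delta in F. simpl in F. unfold e in F. lra. }
  assert (c' = 2) by lra. subst c'.
  rewrite (Fval y r Hy). f_equal. ring.
Qed.
Lemma single_aux a (Ha : a <> zv n) k1 k2 r1 r2 : 0 < k1 -> k1 < k2 ->
  T (delta a 1) (vscal k1 a) = Fin r1 -> T (delta a 1) (vscal k2 a) = Fin r2 -> False.
Proof.
  intros P1 P12 E1 E2.
  set (k0 := vscal (/ dot n a a) a).
  assert (Hk0 : dot n k0 a = 1) by (apply k0_spec; exact Ha).
  set (a2 := vscal 2 a).
  assert (Ha2 : a2 <> zv n).
  { intro E. apply Ha. apply (vscal_zero_iff n 2 a ltac:(lra)). exact E. }
  set (kk := vscal (/ 2) k0).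
  assert (Hkk : dot n kk a2 = 1).
  { unfold kk, a2. rewrite dot_scal_l, dot_scal_r, Hk0. field. }
  destruct (proper_T (delta a2 1) (Cvx_delta _ _ _)) as [y3 [r3 E3]].
  destruct (ray a2 Ha2 1 y3 r3 E3) as [kp [Hkp Ey3]].
  set (k3 := 2 * kp).
  assert (Ey3' : y3 = vscal k3 a).
  { rewrite Ey3. unfold a2, k3. apply functional_extensionality; intro i. unfold vscal. ring. }
  set (f := T (cst 1)).
  assert (Hf : Cvx f) by (apply HT, Cvx_cst).
  destruct Hf as [Hfc _].
  assert (Fv : forall kap r, T (delta a 1) (vscal kap a) = Fin r -> f (vscal kap a) = Fin kap).
  { intros kap r E. unfold f. rewrite (L1 a k0 Hk0 _ r E). rewrite dot_scal_r, Hk0. f_equal; ring. }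
  assert (F3 : f (vscal k3 a) = Fin (k3 / 2)).
  { unfold f. rewrite <- Ey3'. rewrite (L1 a2 kk Hkk y3 r3 E3). rewrite Ey3. unfold kk, a2.
    rewrite dot_scal_l, !dot_scal_r, Hk0. unfold k3. f_equal. field. }
  assert (Hk3 : 0 < k3) by (unfold k3; lra).
  destruct (Rlt_le_dec k2 k3) as [C1|C1].
  - set (t := (k3 - k2) / (k3 - k1)).
    assert (Ht : 0 <= t <= 1).
    { unfold t. split; [apply mydiv_nonneg; lra|]. apply mydiv_le1; lra. }
    pose proof (Hfc (vscal k1 a) (vscal k3 a) k1 (k3 / 2) t Ht) as C.
    rewrite (Fv k1 r1 E1), F3 in C. simpl in C. specialize (C (Rle_refl _) (Rle_refl _)).
    rewrite vscal_comb in C.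
    replace (t * k1 + (1 - t) * k3) with k2 in C by (unfold t; field; lra).
    rewrite (Fv k2 r2 E2) in C. simpl in C.
    assert (0 < 1 - t) by (unfold t; apply Rlt_Rminus; apply mydiv_lt1; lra).
    assert (k2 = t * k1 + (1 - t) * k3) by (unfold t; field; lra).
    nra.
  - destruct (Rlt_le_dec k3 k1) as [C2|C2].
    + set (t := (k2 - k1) / (k2 - k3)).
      assert (Ht : 0 <= t <= 1).
      { unfold t. split; [apply mydiv_nonneg; lra|]. apply mydiv_le1; lra. }
      pose proof (Hfc (vscal k3 a) (vscal k2 a) (k3 / 2) k2 t Ht) as C.
      rewrite (Fv k2 r2 E2), F3 in C. simpl in C. specialize (C (Rle_refl _) (Rle_refl _)).
      rewrite vscal_comb in C.
      replace (t * k3 + (1 - t) * k2) with k1 in C by (unfold t; field; lra).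
      rewrite (Fv k1 r1 E1) in C. simpl in C.
      assert (0 < t) by (unfold t; apply Rdiv_lt_0_compat; lra).
      assert (k1 = t * k3 + (1 - t) * k2) by (unfold t; field; lra).
      nra.
    + destruct (HT _ (Cvx_delta n a 1)) as [Hpc _].
      set (t := (k2 - k3) / (k2 - k1)).
      assert (Ht : 0 <= t <= 1).
      { unfold t. split; [apply mydiv_nonneg; lra|]. apply mydiv_le1; lra. }
      pose proof (Hpc (vscal k1 a) (vscal k2 a) r1 r2 t Ht) as C.
      rewrite E1, E2 in C. simpl in C. specialize (C (Rle_refl _) (Rle_refl _)).
      rewrite vscal_comb in C.
      replace (t * k1 + (1 - t) * k2) with k3 in C by (unfold t; field; lra).
      destruct (T (delta a 1) (vscal k3 a)) eqn:E; simpl in C; [|tauto].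
      rewrite (Fv k3 r E) in F3. injection F3. intro. lra.
Qed.

Lemma delta_struct a : a <> zv n -> exists lam, 0 < lam /\
  forall c, T (delta a c) = delta (vscal lam a) (lam * c).
Proof.
  intro Ha.
  set (k0 := vscal (/ dot n a a) a).
  assert (Hk0 : dot n k0 a = 1) by (apply k0_spec; exact Ha).
  destruct (proper_T (delta a 1) (Cvx_delta _ _ _)) as [ys [rs Es]].
  destruct (ray a Ha 1 ys rs Es) as [lam [Hl Eys]].
  exists lam. split; [exact Hl|]. intro c.
  apply functional_extensionality. intro y.
  destruct (excluded_middle_informative (y = vscal lam a)) as [->|Hy].
  - rewrite delta_at. destruct (dom_fin a k0 Hk0 1 c ys rs Es) as [v Ev].
    rewrite <- Eys. rewrite Ev. pose proof (S1 a k0 Hk0 c ys v Ev) as Ev'.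
    rewrite Eys, dot_scal_r, Hk0 in Ev'. f_equal. lra.
  - rewrite delta_off by exact Hy.
    destruct (T (delta a c) y) eqn:E; [|reflexivity].
    exfalso. destruct (dom_fin a k0 Hk0 c 1 y r E) as [v Ev].
    destruct (ray a Ha 1 y v Ev) as [ky [Hky Ey]].
    rewrite Ey in Ev. rewrite Eys in Es.
    destruct (Rtotal_order ky lam) as [C|[C|C]].
    + exact (single_aux a Ha ky lam v rs Hky C Ev Es).
    + apply Hy. rewrite Ey, C. reflexivity.
    + exact (single_aux a Ha lam ky rs v Hl C Es Ev).
Qed.

Lemma ident x lam : 0 < lam -> (forall c, T (delta x c) = delta (vscal lam x) (lam * c)) ->
  forall chi, Cvx chi -> T chi (vscal lam x) = ERscal lam (chi x).
Proof.
  intros Hl Hd chi Hc.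
  assert (H : forall c, ERle (chi x) (Fin c) <-> ERle (T chi (vscal lam x)) (Fin (lam * c))).
  { intro c. rewrite <- fle_delta, <- fle_delta, <- Hd. apply H1; [exact Hc | apply Cvx_delta]. }
  destruct (chi x) as [r|] eqn:Er; destruct (T chi (vscal lam x)) as [s|] eqn:Es; simpl in *.
  - f_equal. pose proof (proj1 (H r) (Rle_refl _)).
    pose proof (proj2 (H (s / lam))). replace (lam * (s / lam)) with s in H4 by (field; lra).
    specialize (H4 (Rle_refl _)).
    apply Rmult_le_compat_l with (r := lam) in H4; [|lra].
    replace (lam * (s / lam)) with s in H4 by (field; lra). lra.
  - exfalso. apply (proj1 (H r)). apply Rle_refl.
  - exfalso. apply (proj2 (H (s / lam))). replace (lam * (s / lam)) with s by (field; lra). apply Rle_refl.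
  - reflexivity.
Qed.
Lemma g_nonpos : fle (T (cst (-1))) (lin (zv n)).
Proof.
  rewrite <- (Tfix (lin (zv n))) by (apply Cvx_lin || apply ph_lin).
  apply (proj1 (H1 _ _ (Cvx_cst n (-1)) (Cvx_lin n (zv n)))).
  intro y. unfold cst, lin. simpl. rewrite dot_zv_l. lra.
Qed.

Lemma f_at x lam : 0 < lam -> (forall c, T (delta x c) = delta (vscal lam x) (lam * c)) ->
  forall e, T (cst e) (vscal lam x) = Fin (lam * e).
Proof. intros Hl Hd e. rewrite (ident x lam Hl Hd (cst e) (Cvx_cst n e)). reflexivity. Qed.

Lemma constC x0 (Hx0 : x0 <> zv n) : exists C, 0 < C /\
  forall x, x <> zv n -> forall c, T (delta x c) = delta (vscal C x) (C * c).
Proof.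
  set (f := T (cst 1)). set (g := T (cst (-1))).
  assert (Hf0 := T_cst1_nonneg). fold f in Hf0.
  assert (Hg0 := g_nonpos). fold g in Hg0.
  destruct (proper_T (cst 1) (Cvx_cst n 1)) as [y1 [r1 Ey1]].
  assert (I : InIm T (fun y => ERadd (f y) (g y))).
  { apply H3; [apply ImT, Cvx_cst | apply ImT, Cvx_cst |].
    exists y1. unfold f. rewrite Ey1. specialize (Hg0 y1). fold g.
    destruct (g y1); simpl in *; [discriminate | tauto]. }
  destruct I as [phi3 [Hphi3 TP3]].
  assert (Hnz : forall x, x <> zv n -> phi3 x = Fin 0).
  { intros x Hx. destruct (delta_struct x Hx) as [lam [Hl Hd]].
    pose proof (ident x lam Hl Hd phi3 Hphi3) as E.
    rewrite TP3 in E. unfold f, g in E. rewrite !(f_at x lam Hl Hd) in E. simpl in E.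
    destruct (phi3 x); simpl in E; [|discriminate]. injection E. intro E'.
    f_equal. assert (lam * r = 0) by lra. apply Rmult_integral in H. destruct H; lra. }
  destruct Hphi3 as [Hc3 [Hl3 Hp3]].
  assert (Hneg : vscal (-1) x0 <> zv n).
  { intro E. apply Hx0. apply (vscal_zero_iff n (-1) x0 ltac:(lra)). exact E. }
  assert (H2x : vscal 2 x0 <> zv n).
  { intro E. apply Hx0. apply (vscal_zero_iff n 2 x0 ltac:(lra)). exact E. }
  assert (Hz : phi3 (zv n) = Fin 0).
  { pose proof (Hc3 x0 (vscal (-1) x0) 0 0 (1/2) ltac:(lra)) as C1.
    rewrite (Hnz x0 Hx0), (Hnz _ Hneg) in C1. simpl in C1.
    specialize (C1 (Rle_refl _) (Rle_refl _)).
    replace (vadd (vscal (1 / 2) x0) (vscal (1 - 1 / 2) (vscal (-1) x0))) with (zv n) in C1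
      by (apply functional_extensionality; intro i; unfold vadd, vscal, zv; field).
    destruct (phi3 (zv n)) as [s|] eqn:Es; simpl in C1; [|tauto].
    pose proof (Hc3 (zv n) (vscal 2 x0) s 0 (1/2) ltac:(lra)) as C2.
    rewrite Es, (Hnz _ H2x) in C2. simpl in C2. specialize (C2 (Rle_refl _) (Rle_refl _)).
    replace (vadd (vscal (1 / 2) (zv n)) (vscal (1 - 1 / 2) (vscal 2 x0))) with x0 in C2
      by (apply functional_extensionality; intro i; unfold vadd, vscal, zv; field).
    rewrite (Hnz x0 Hx0) in C2. simpl in C2. f_equal. lra. }
  assert (Ephi : phi3 = lin (zv n)).
  { apply functional_extensionality; intro x. unfold lin. rewrite dot_zv_l.
    destruct (excluded_middle_informative (x = zv n)) as [->|Hx]; [exact Hz | apply Hnz; exact Hx]. }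
  rewrite Ephi, Tfix in TP3 by (apply Cvx_lin || apply ph_lin).
  assert (FG : forall y, exists s, f y = Fin s /\ g y = Fin (- s) /\ 0 <= s).
  { intro y. assert (V := f_equal (fun h => h y) TP3). simpl in V. unfold lin in V.
    rewrite dot_zv_l in V. symmetry in V. destruct (ERadd_fin_inv _ _ _ V) as [p [q [Ep [Eq Epq]]]].
    exists p. rewrite Ep, Eq. split; [reflexivity|]. split; [f_equal; lra|].
    specialize (Hf0 y). rewrite Ep in Hf0. simpl in Hf0. rewrite dot_zv_l in Hf0. exact Hf0. }
  destruct (HT _ (Cvx_cst n (-1))) as [Hgc _]. fold g in Hgc.
  destruct (FG (zv n)) as [s0 [Ef0 [Eg0 Hs0]]].
  assert (Const : forall y s, f y = Fin s -> s = s0).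
  { intros y s Ef. destruct (FG y) as [sy [Efy [Egy Hsy]]]. rewrite Ef in Efy. injection Efy. intros ->.
    destruct (Rtotal_order sy s0) as [Cl|[Ce|Cg]]; [exfalso| exact Ce| exfalso].
    - set (m := (sy + 1) / (s0 - sy)).
      assert (Hm : m * (s0 - sy) = sy + 1) by (unfold m; field; lra).
      assert (Hmp : 0 < m) by (unfold m; apply Rdiv_lt_0_compat; lra).
      set (z := vscal (1 + m) y).
      destruct (FG z) as [sz [Efz [Egz Hsz]]].
      pose proof (Hgc z (zv n) (- sz) (- s0) (1 / (1 + m)) ltac:(split; [apply mydiv_nonneg; lra | apply mydiv_le1; lra])) as C.
      rewrite Egz, Eg0 in C. simpl in C. specialize (C (Rle_refl _) (Rle_refl _)).
      replace (vadd (vscal (1 / (1 + m)) z) (vscal (1 - 1 / (1 + m)) (zv n))) with y in C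
        by (apply functional_extensionality; intro i; unfold z, vadd, vscal, zv; field; lra).
      rewrite Egy in C. simpl in C.
      assert (E1 : (1 + m) * (- sy) <= (1 + m) * (1 / (1 + m) * - sz + (1 - 1 / (1 + m)) * - s0))
        by (apply Rmult_le_compat_l; lra).
      replace ((1 + m) * (1 / (1 + m) * - sz + (1 - 1 / (1 + m)) * - s0)) with (- sz - m * s0) in E1
        by (field; lra).
      nra.
    - set (m := (s0 + 1) / (sy - s0)).
      assert (Hm : m * (sy - s0) = s0 + 1) by (unfold m; field; lra).
      assert (Hmp : 0 < m) by (unfold m; apply Rdiv_lt_0_compat; lra).
      set (z := vscal (- m) y).
      destruct (FG z) as [sz [Efz [Egz Hsz]]].
      pose proof (Hgc z y (- sz) (- sy) (1 / (1 + m)) ltac:(split; [apply mydiv_nonneg; lra | apply mydiv_le1; lra])) as C.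
      rewrite Egz, Egy in C. simpl in C. specialize (C (Rle_refl _) (Rle_refl _)).
      replace (vadd (vscal (1 / (1 + m)) z) (vscal (1 - 1 / (1 + m)) y)) with (zv n) in C
        by (apply functional_extensionality; intro i; unfold z, vadd, vscal, zv; field; lra).
      rewrite Eg0 in C. simpl in C.
      assert (E1 : (1 + m) * (- s0) <= (1 + m) * (1 / (1 + m) * - sz + (1 - 1 / (1 + m)) * - sy))
        by (apply Rmult_le_compat_l; lra).
      replace ((1 + m) * (1 / (1 + m) * - sz + (1 - 1 / (1 + m)) * - sy)) with (- sz - m * sy) in E1
        by (field; lra).
      nra. }
  assert (Lam : forall x lam, x <> zv n -> 0 < lam ->
     (forall c, T (delta x c) = delta (vscal lam x) (lam * c)) -> lam = s0).
  { intros x lam Hx Hl Hd. pose proof (f_at x lam Hl Hd 1) as E. fold f in E.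
    apply Const in E. lra. }
  exists s0. split.
  - destruct (delta_struct x0 Hx0) as [lam [Hl Hd]]. rewrite <- (Lam x0 lam Hx0 Hl Hd). exact Hl.
  - intros x Hx c. destruct (delta_struct x Hx) as [lam [Hl Hd]].
    rewrite <- (Lam x lam Hx Hl Hd). apply Hd.
Qed.
Lemma full x0 (Hx0 : x0 <> zv n) : exists C, 0 < C /\
  forall chi, Cvx chi -> forall x, T chi (vscal C x) = ERscal C (chi x).
Proof.
  destruct (constC x0 Hx0) as [C [HC Hd]].
  assert (vback : forall y : Vec n, vscal C (vscal (/ C) y) = y).
  { intro y. apply functional_extensionality; intro i. unfold vscal. field. lra. }
  assert (Czv : vscal C (zv n) = zv n).
  { apply functional_extensionality; intro i. unfold vscal, zv. ring. }
  assert (Hnz : forall y : Vec n, y <> zv n -> vscal (/ C) y <> zv n).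
  { intros y Hy E. apply Hy. rewrite <- (vback y), E. exact Czv. }
  assert (Hoff : forall c (y : Vec n), y <> zv n -> T (delta (zv n) c) y = PInf).
  { intros c y Hy. rewrite <- (vback y).
    rewrite (ident (vscal (/ C) y) C HC (Hd _ (Hnz y Hy)) _ (Cvx_delta _ _ _)).
    rewrite delta_off by (apply Hnz; exact Hy). reflexivity. }
  assert (Hneg : vscal (-1) x0 <> zv n).
  { intro E. apply Hx0. apply (vscal_zero_iff n (-1) x0 ltac:(lra)). exact E. }
  assert (H2x : vscal 2 x0 <> zv n).
  { intro E. apply Hx0. apply (vscal_zero_iff n 2 x0 ltac:(lra)). exact E. }
  assert (Hcnz : forall e (y : Vec n), y <> zv n -> T (cst e) y = Fin (C * e)).
  { intros e y Hy. rewrite <- (vback y). apply f_at; [exact HC | apply Hd, Hnz, Hy]. }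
  assert (Hcst : forall e (y : Vec n), T (cst e) y = Fin (C * e)).
  { intros e y. destruct (excluded_middle_informative (y = zv n)) as [->|Hy]; [|apply Hcnz; exact Hy].
    destruct (HT _ (Cvx_cst n e)) as [Hc3 _].
    pose proof (Hc3 x0 (vscal (-1) x0) (C * e) (C * e) (1/2) ltac:(lra)) as C1.
    rewrite (Hcnz e x0 Hx0), (Hcnz e _ Hneg) in C1. simpl in C1.
    specialize (C1 (Rle_refl _) (Rle_refl _)).
    replace (vadd (vscal (1 / 2) x0) (vscal (1 - 1 / 2) (vscal (-1) x0))) with (zv n) in C1
      by (apply functional_extensionality; intro i; unfold vadd, vscal, zv; field).
    destruct (T (cst e) (zv n)) as [s|] eqn:Es; simpl in C1; [|tauto].
    pose proof (Hc3 (zv n) (vscal 2 x0) s (C * e) (1/2) ltac:(lra)) as C2.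
    rewrite Es, (Hcnz e _ H2x) in C2. simpl in C2. specialize (C2 (Rle_refl _) (Rle_refl _)).
    replace (vadd (vscal (1 / 2) (zv n)) (vscal (1 - 1 / 2) (vscal 2 x0))) with x0 in C2
      by (apply functional_extensionality; intro i; unfold vadd, vscal, zv; field).
    rewrite (Hcnz e x0 Hx0) in C2. simpl in C2. f_equal. lra. }
  assert (Hzero : forall c, T (delta (zv n) c) = delta (vscal C (zv n)) (C * c)).
  { intro c. rewrite Czv.
    destruct (proper_T (delta (zv n) c) (Cvx_delta _ _ _)) as [y [r Ey]].
    destruct (excluded_middle_informative (y = zv n)) as [->|Hy];
      [| rewrite Hoff in Ey by exact Hy; discriminate].
    assert (Ed : T (delta (zv n) c) = delta (zv n) r).
    { apply functional_extensionality; intro y.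
      destruct (excluded_middle_informative (y = zv n)) as [->|Hy].
      - rewrite delta_at. exact Ey.
      - rewrite delta_off by exact Hy. apply Hoff. exact Hy. }
    rewrite Ed. f_equal.
    assert (Q : forall e, e <= c <-> C * e <= r).
    { intro e. pose proof (H1 _ _ (Cvx_cst n e) (Cvx_delta n (zv n) c)) as E.
      rewrite Ed, !fle_delta, Hcst in E. simpl in E. exact E. }
    pose proof (proj1 (Q c) (Rle_refl _)).
    pose proof (proj2 (Q (r / C))). replace (C * (r / C)) with r in H0 by (field; lra).
    specialize (H0 (Rle_refl _)).
    apply Rmult_le_compat_l with (r := C) in H0; [|lra].
    replace (C * (r / C)) with r in H0 by (field; lra). lra. }
  exists C. split; [exact HC|].
  intros chi Hchi x. apply ident; [exact HC| |exact Hchi].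
  destruct (excluded_middle_informative (x = zv n)) as [->|Hx]; [exact Hzero | apply Hd; exact Hx].
Qed.
End Main.

Lemma vec0_eq (x y : Vec 0) : x = y.
Proof. apply functional_extensionality. intro i. apply (Fin.case0 (fun i => x i = y i)). Qed.

Lemma ERle_antisym a b : ERle a b -> ERle b a -> a = b.
Proof. destruct a, b; simpl; try tauto. intros. f_equal. lra. Qed.

Lemma fle0 (f g : efun 0) : fle f g <-> ERle (f (zv 0)) (g (zv 0)).
Proof.
  split; [intro H; apply H|]. intros H x. rewrite (vec0_eq x (zv 0)). exact H.
Qed.

Lemma tan0 (f g : efun 0) u : f (zv 0) = Fin u -> (tangent f g <-> g (zv 0) = Fin u).
Proof.
  intro Hf. split.
  - intros [Hle Heps]. apply (proj1 (fle0 _ _)) in Hle. rewrite Hf in Hle.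
    destruct (g (zv 0)) as [v|] eqn:Eg; simpl in Hle.
    + destruct (Req_dec v u) as [->|Hne]; [reflexivity|].
      exfalso. apply (Heps (v - u) ltac:(lra)). apply (proj2 (fle0 _ _)). cbv beta. rewrite Hf, Eg. simpl. lra.
    + exfalso. apply (Heps 1 ltac:(lra)). apply (proj2 (fle0 _ _)). cbv beta. rewrite Hf, Eg. simpl. trivial.
  - intro Hg. split.
    + apply (proj2 (fle0 _ _)). rewrite Hf, Hg. simpl. lra.
    + intros eps He H. apply (proj1 (fle0 _ _)) in H. cbv beta in H. rewrite Hf, Hg in H. simpl in H. lra.
Qed.

Lemma Cvx_aff n (l : efun n) : affine l -> Cvx l.
Proof.
  intros [u [b Hl]].
  assert (E : l = fun x => Fin (dot n u x + b)) by (apply functional_extensionality; exact Hl).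
  rewrite E. apply (Cvx_fin n _ (sabs n u)); [apply sabs_nonneg| |].
  - intros. rewrite dot_comb. lra.
  - intros x y d Hd0 Hd. pose proof (dot_lip' n u x y d Hd). lra.
Qed.

Lemma tan_scale n C (f g F G : efun n) : 0 < C ->
  (forall x, F (vscal C x) = ERscal C (f x)) -> (forall x, G (vscal C x) = ERscal C (g x)) ->
  (forall x, exists u, f x = Fin u) -> (tangent f g <-> tangent F G).
Proof.
  intros HC HF HG Hfin.
  assert (vback : forall y : Vec n, vscal C (vscal (/ C) y) = y).
  { intro y. apply functional_extensionality; intro i. unfold vscal. field. lra. }
  assert (Key : forall eps, fle (fun x => ERadd (F x) (Fin (C * eps))) G <->
                            fle (fun x => ERadd (f x) (Fin eps)) g).
  { intro eps. split.
    - intros H x. specialize (H (vscal C x)). simpl in H. rewrite HF, HG in H.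
      destruct (Hfin x) as [u Eu]. rewrite Eu in *. simpl in *.
      destruct (g x); simpl in *; [|trivial].
      apply Rmult_le_reg_l with C; lra.
    - intros H y. rewrite <- (vback y). simpl. rewrite HF, HG.
      specialize (H (vscal (/ C) y)). simpl in H.
      destruct (Hfin (vscal (/ C) y)) as [u Eu]. rewrite Eu in *. simpl in *.
      destruct (g (vscal (/ C) y)); simpl in *; [|trivial].
      nra. }
  assert (Kfle : fle F G <-> fle f g).
  { split.
    - intros H x. specialize (H (vscal C x)). rewrite HF, HG in H.
      destruct (Hfin x) as [u Eu]. rewrite Eu in *. simpl in *.
      destruct (g x); simpl in *; [|trivial].
      apply Rmult_le_reg_l with C; lra.
    - intros H y. rewrite <- (vback y). rewrite HF, HG.
      specialize (H (vscal (/ C) y)).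
      destruct (Hfin (vscal (/ C) y)) as [u Eu]. rewrite Eu in *. simpl in *.
      destruct (g (vscal (/ C) y)); simpl in *; [|trivial].
      nra. }
  unfold tangent. split.
  - intros [H1 H2]. split; [apply Kfle; exact H1|].
    intros eps He Hc. apply (H2 (eps / C)). apply Rdiv_lt_0_compat; lra.
    apply Key. replace (C * (eps / C)) with eps by (field; lra). exact Hc.
  - intros [H1 H2]. split; [apply Kfle; exact H1|].
    intros eps He Hc. apply (H2 (C * eps)). nra. apply Key. exact Hc.
Qed.

Theorem mainTheorem6 (n : nat) (T : efun n -> efun n)
  (HT : forall phi, Cvx phi -> Cvx (T phi))
  (H1 : forall phi psi, Cvx phi -> Cvx psi -> (fle phi psi <-> fle (T phi) (T psi)))
  (H2 : forall phi, Cvx phi -> pos_homogeneous phi -> forall x, T phi x = phi x)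
  (H3 : forall phi' psi', InIm T phi' -> InIm T psi' ->
          (exists x, ERadd (phi' x) (psi' x) <> PInf) ->
          InIm T (fun x => ERadd (phi' x) (psi' x))) :
  (forall (a : Vec n) (c : R), exists (b : Vec n) (d : R),
      forall x, T (delta a c) x = delta b d x)
  /\
  (forall (l phi : efun n), affine l -> Cvx phi ->
      (tangent l phi <-> tangent (T l) (T phi))).
Proof.
  destruct n as [|m].
  - split.
    + intros a c. destruct (HT _ (Cvx_delta 0 a c)) as [_ [_ [x1 Hx1]]].
      destruct (T (delta a c) x1) as [d|] eqn:Ed; [|congruence].
      exists a, d. intro x.
      assert (x1 = a) by apply vec0_eq. subst x1.
      assert (x = a) by apply vec0_eq. subst x.
      rewrite delta_at. exact Ed.
    + intros l phi Hl Hphi.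
      pose proof (Cvx_aff 0 l Hl) as Hlc.
      destruct Hl as [u [b Hl]].
      rewrite (tan0 l phi _ (Hl (zv 0))).
      destruct (HT l Hlc) as [_ [_ [x1 Hx1]]].
      assert (x1 = zv 0) by apply vec0_eq. subst x1.
      destruct (T l (zv 0)) as [v|] eqn:Ev; [|congruence].
      rewrite (tan0 (T l) (T phi) v Ev).
      split.
      * intro E. assert (Q : fle l phi /\ fle phi l).
        { split; apply (proj2 (fle0 _ _)); rewrite E, Hl; simpl; lra. }
        destruct Q as [Q1 Q2].
        apply (proj1 (H1 _ _ Hlc Hphi)) in Q1. apply (proj1 (H1 _ _ Hphi Hlc)) in Q2.
        apply (proj1 (fle0 _ _)) in Q1. apply (proj1 (fle0 _ _)) in Q2. rewrite <- Ev. apply ERle_antisym; assumption.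
      * intro E. assert (Q : fle (T l) (T phi) /\ fle (T phi) (T l)).
        { split; apply (proj2 (fle0 _ _)); rewrite E, Ev; simpl; lra. }
        destruct Q as [Q1 Q2].
        apply (proj2 (H1 _ _ Hlc Hphi)) in Q1. apply (proj2 (H1 _ _ Hphi Hlc)) in Q2.
        apply (proj1 (fle0 _ _)) in Q1. apply (proj1 (fle0 _ _)) in Q2. rewrite <- (Hl (zv 0)). apply ERle_antisym; assumption.
  - set (x0 := (fun _ => 1) : Vec (S m)).
    assert (Hx0 : x0 <> zv (S m)).
    { intro E. apply (f_equal (fun f => f Fin.F1)) in E. unfold x0, zv in E. lra. }
    destruct (full (S m) T HT H1 H2 H3 x0 Hx0) as [C [HC HF]].
    assert (vback : forall y : Vec (S m), vscal C (vscal (/ C) y) = y).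
    { intro y. apply functional_extensionality; intro i. unfold vscal. field. lra. }
    split.
    + intros a c. exists (vscal C a), (C * c). intro x.
      rewrite <- (vback x). rewrite (HF _ (Cvx_delta _ a c)).
      destruct (excluded_middle_informative (vscal (/ C) x = a)) as [E|E].
      * rewrite E, !delta_at. reflexivity.
      * rewrite (delta_off _ a c) by exact E. rewrite delta_off; [reflexivity|].
        intro E'. apply E. apply functional_extensionality; intro i.
        apply (f_equal (fun f => f i)) in E'. unfold vscal in *.
        apply Rmult_eq_reg_l with C; [exact E' | lra].
    + intros l phi Hl Hphi.
      pose proof (Cvx_aff _ l Hl) as Hlc.
      apply (tan_scale (S m) C); [exact HC | apply HF; exact Hlc | apply HF; exact Hphi |].
      destruct Hl as [u [b Hl]]. intro x. rewrite Hl. eauto.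
Qed.
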